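(* Let $X$ be a compact Hausdorff space and $\varphi:X\to X$ a homeomorphism. If $x\in X$ is aperiodic, then the representation $\pi_x$ of the semicrossed product $C(X)\rtimes_\varphi\mathbb{Z}^+$ on $\ell^2(\mathbb{N})$ is a nest representation.
   Context: Semicrossed product: let $\mathcal{A}_0$ be the algebra generated by $C(X)$ and a symbol $U$ subject to $fU=U(f\circ\varphi)$, with elements $\sum_{n=0}^NU^nf_n$; $C(X)\rtimes_\varphi\mathbb{Z}^+$ is its completion in the norm given by the supremum of $\|\pi(F)\|$ over homomorphisms $\pi$ into $\mathcal{B}(\mathcal{H})$ that are $*$-representations on $C(X)$ with $\pi(U)$ an isometry. For $x\in X$ set $x_n=\varphi^{n-1}(x)$, $n\ge1$, and define $\pi_x$ on $\ell^2(\mathbb{N})$ by $\pi_x(f)(z_1,z_2,\dots)=(f(x_1)z_1,f(x_2)z_2,\dots)$ and $\pi_x(U)(z_1,z_2,\dots)=(0,z_1,z_2,\dots)$. A point $x$ is aperiodic if $\varphi^n(x)\neq x$ for all $n\ge1$. A representation is a nest representation if the lattice of closed subspaces invariant under it is linearly ordered by inclusion. *)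

(* Defs.v *)
From HB Require Import structures.
From mathcomp Require Import all_boot all_order all_algebra.
From mathcomp Require Import all_classical all_reals all_analysis.
From mathcomp.real_closed Require Import complex.
Set Implicit Arguments. Unset Strict Implicit. Unset Printing Implicit Defensive.
Import Order.TTheory GRing.Theory Num.Theory.
Import numFieldNormedType.Exports.
Local Open Scope ring_scope.
Local Open Scope classical_set_scope.

Section Defs.
Variable R : realType.
Local Notation C := (R[i])%C.

Definition ccontinuous (X : topologicalType) (f : X -> C) : Prop :=
  continuous (fun x => complex.Re (f x)) /\ continuous (fun x => complex.Im (f x)).

Definition compact_hausdorff (X : topologicalType) : Prop :=
  compact [set: X] /\ hausdorff_space X.

Definition homeomorphism (X : topologicalType) (phi : X -> X) : Prop :=
  continuous phi /\ exists psi : X -> X,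
    [/\ cancel phi psi, cancel psi phi & continuous psi].

Definition aperiodic (X : Type) (phi : X -> X) (x : X) : Prop :=
  forall n : nat, (0 < n)%N -> iter n phi x <> x.

Definition l2 : set (nat -> C) :=
  [set z | cvgn (series (fun k => Normc.normc (z k) ^+ 2 : R)) ].

Definition l2dist2 (z w : nat -> C) : R :=
  limn (series (fun k => Normc.normc (z k - w k) ^+ 2 : R)).

Definition closed_subspace (M : set (nat -> C)) : Prop :=
  [/\ M `<=` l2,
      M (fun _ => 0),
      (forall z w, M z -> M w -> M (fun k => z k + w k)),
      (forall (a : C) z, M z -> M (fun k => a * z k)) &
      (forall (w : nat -> nat -> C) (z : nat -> C),
          (forall j, M (w j)) -> l2 z ->
          (l2dist2 (w j) z @[j --> \oo] --> 0) -> M z) ].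

(* the operators pi_x(f) and pi_x(U) on sequences; coordinate k (0-based)
   corresponds to x_{k+1} = phi^k(x) *)
Definition pi_f (X : Type) (phi : X -> X) (x : X) (f : X -> C)
  (z : nat -> C) : nat -> C := fun k => f (iter k phi x) * z k.

Definition pi_U (z : nat -> C) : nat -> C :=
  fun k => if k is k'.+1 then z k' else 0.

(* elements of the dense algebra A_0: sum_{n=0}^N U^n f_n, given by the
   list [f_0; ...; f_N] of continuous functions *)
Definition A0_elt (X : topologicalType) (F : seq (X -> C)) : Prop :=
  forall f, f \in F -> ccontinuous f.

Definition pi_A0 (X : Type) (phi : X -> X) (x : X) (F : seq (X -> C))
  (z : nat -> C) : nat -> C :=
  fun k => \sum_(n < size F) iter n pi_U (pi_f phi x (nth (fun _ => 0) F n) z) k.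

Definition invariant_subspace (X : topologicalType) (phi : X -> X) (x : X)
  (M : set (nat -> C)) : Prop :=
  closed_subspace M /\
  forall F : seq (X -> C), A0_elt F -> forall z, M z -> M (pi_A0 phi x F z).

Definition nest_rep (X : topologicalType) (phi : X -> X) (x : X) : Prop :=
  forall M N, invariant_subspace phi x M -> invariant_subspace phi x N ->
    M `<=` N \/ N `<=` M.
End Defs.

(* Main.v *)
Require Import Defs.
From mathcomp Require Import all_boot all_order all_algebra.
From mathcomp Require Import all_classical all_reals all_analysis.
From mathcomp.real_closed Require Import complex.
Set Implicit Arguments. Unset Strict Implicit. Unset Printing Implicit Defensive.
Import Order.TTheory GRing.Theory Num.Theory.
Import numFieldNormedType.Exports.
Local Open Scope ring_scope.
Local Open Scope classical_set_scope.

Lemma tail_lemma (R : realType) (u : nat -> R) (v : nat -> nat -> R) :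
  (forall j, 0 <= u j) -> cvgn (series u) ->
  (forall n j, 0 <= v n j) -> (forall n j, (j < n)%N -> v n j = 0) ->
  (forall n j, v n j <= u j) ->
  limn (series (v n)) @[n --> \oo] --> 0.
Proof.
move=> u0 cu v0 vlt vle.
have cv : forall n, cvgn (series (v n)).
  by move=> n; apply: (series_le_cvg (v0 n) u0 (vle n) cu).
apply: (@squeeze_cvgr _ _ _ _ (fun _ => 0) (fun n => limn (series u) - series u n)).
- near=> n; apply/andP; split.
    apply: limr_ge => //; near=> m; rewrite /series /=; apply: sumr_ge0 => *; exact: v0.
  have -> : limn (series u) - series u n = limn (series u - cst (series u n)).
    rewrite limB //; first by rewrite lim_cst.
    exact: is_cvg_cst.
  apply: ler_lim => //.
    apply: is_cvgB => //; exact: is_cvg_cst.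
  near=> m.
  have nm : (n <= m)%N by near: m; exact: nbhs_infty_ge.
  have -> : (series u - cst (series u n)) m = series u m - series u n by [].
  rewrite sub_series_geq // seriesEnat /= (@big_cat_nat _ _ _ n 0 m _ _ (leq0n n) nm) /=.
  have -> : \sum_(0 <= k < n) v n k = 0.
    by rewrite big_nat big1 // => k /andP[_ kn]; exact: vlt.
  by rewrite add0r; apply: ler_sum_nat => k _; exact: vle.
- exact: cvg_cst.
- rewrite -(subrr (limn (series u))); apply: cvgB; first exact: cvg_cst.
  exact: cu.
Unshelve. all: by end_near. Qed.

Lemma normc_ge0 (R : realType) (c : R[i]) : 0 <= Normc.normc c.
Proof. by case: c => a b; exact: sqrtr_ge0. Qed.

Lemma normc_real (R : realType) (r : R) : Normc.normc (r%:C)%C = `|r|.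
Proof. by rewrite /= expr0n /= addr0 sqrtr_sqr. Qed.

Lemma l2_le (R : realType) (z t : nat -> R[i]) :
  l2 z -> (forall j, Normc.normc (t j) <= Normc.normc (z j)) -> l2 t.
Proof.
move=> lz le; apply: (series_le_cvg _ _ _ lz) => j.
- exact: exprn_ge0 (normc_ge0 _).
- exact: exprn_ge0 (normc_ge0 _).
- by rewrite !expr2 ler_pM // normc_ge0.
Qed.

Lemma dist_tail (R : realType) (z t : nat -> R[i]) (w : nat -> nat -> R[i]) :
  l2 z -> (forall n j, (j < n)%N -> w n j = t j) ->
  (forall n j, Normc.normc (w n j - t j) <= Normc.normc (z j)) ->
  l2dist2 (w n) t @[n --> \oo] --> 0.
Proof.
move=> lz h1 h2; rewrite /l2dist2.
apply: (tail_lemma (u := fun k => Normc.normc (z k) ^+ 2)) => //.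
- by move=> j; exact: exprn_ge0 (normc_ge0 _).
- by move=> n j; exact: exprn_ge0 (normc_ge0 _).
- by move=> n j /h1 ->; rewrite subrr Normc.normc0 expr0n.
- by move=> n j; rewrite !expr2 ler_pM // normc_ge0.
Qed.

Definition ev (R : realType) (k : nat) : nat -> R[i] := fun j => if j == k then 1 else 0.

Lemma pi_A0_1 (R : realType) (X : Type) (phi : X -> X) (x : X) (f : X -> R[i]) z :
  pi_A0 phi x [:: f] z = pi_f phi x f z.
Proof. by apply/funext => k; rewrite /pi_A0 /= big_ord1. Qed.

Lemma pi_A0_shift (R : realType) (X : Type) (phi : X -> X) (x : X) k :
  pi_A0 phi x [:: (fun _ => 0 : R[i]); (fun _ => 1)] (ev R k) = ev R k.+1.
Proof.
apply/funext => j; rewrite /pi_A0 /= big_ord_recr /= big_ord1 /= /pi_f /pi_U /ev.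
by case: j => [|j] /=; rewrite ?mul0r ?mul1r ?add0r.
Qed.

Lemma ccont_cst (R : realType) (X : topologicalType) (c : R[i]) :
  ccontinuous (fun _ : X => c).
Proof. by split; exact: cst_continuous. Qed.

Lemma ccont_real (R : realType) (X : topologicalType) (g : X -> R) :
  continuous g -> ccontinuous (fun y => (g y)%:C%C).
Proof. by move=> cg; split => //=; exact: cst_continuous. Qed.

Lemma A0_1 (R : realType) (X : topologicalType) (f : X -> R[i]) :
  ccontinuous f -> A0_elt [:: f].
Proof. by move=> cf g; rewrite mem_seq1 => /eqP ->. Qed.

Lemma A0_2 (R : realType) (X : topologicalType) (f g : X -> R[i]) :
  ccontinuous f -> ccontinuous g -> A0_elt [:: f; g].
Proof. by move=> cf cg h; rewrite !inE => /orP[] /eqP ->. Qed.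

Lemma ev_shift (R : realType) (X : topologicalType) (phi : X -> X) (x : X) M k :
  invariant_subspace phi x M -> M (ev R k) -> forall j, (k <= j)%N -> M (ev R j).
Proof.
move=> [_ Minv] Mk j /subnKC <-; elim: (j - k)%N => [|n IH]; first by rewrite addn0.
rewrite addnS -(@pi_A0_shift R _ phi x); apply: Minv => //.
by apply: A0_2; exact: ccont_cst.
Qed.

Lemma V_in (R : realType) (X : topologicalType) (phi : X -> X) (x : X) M k z :
  invariant_subspace phi x M -> (forall j, (k <= j)%N -> M (ev R j)) ->
  l2 z -> (forall j, (j < k)%N -> z j = 0) -> M z.
Proof.
move=> [[Ml2 M0 Madd Mscale Mlim] _] Me lz zk.
pose tr n := fun j => if (j < n)%N then z j else 0.
have Mtr : forall n, M (tr n).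
  elim=> [|n IH]; first by have -> : tr 0%N = (fun _ => 0) by apply/funext => j.
  have [nk|kn] := ltnP n k.
    have -> : tr n.+1 = tr n; last by [].
    apply/funext => j; rewrite /tr ltnS leq_eqVlt.
    by case: eqVneq => [->|] //=; rewrite ltnn zk.
  have -> : tr n.+1 = (fun j => tr n j + z n * ev R n j).
    apply/funext => j; rewrite /tr /ev ltnS leq_eqVlt.
    case: eqVneq => [->|] /=; first by rewrite ltnn add0r mulr1.
    by rewrite mulr0 addr0.
  by apply: Madd => //; apply: Mscale; exact: Me.
apply: (Mlim tr) => //; apply: (dist_tail lz).
  by move=> n j; rewrite /tr => ->.
move=> n j; rewrite /tr; case: ifP => _; first by rewrite subrr Normc.normc0 normc_ge0.
by rewrite sub0r; case: (z j) => a b; rewrite /= !sqrrN.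
Qed.

Lemma sep_fun (R : realType) (X : topologicalType) (xs : nat -> X) :
  compact_hausdorff X -> injective xs -> forall N k, exists g : X -> R,
  [/\ continuous g, forall y, 0 <= g y <= 1, g (xs k) = 1 &
      forall j, (j < N)%N -> j <> k -> g (xs j) = 0].
Proof.
case=> cX hX inj N k.
have nX : normal_space X := compact_normal hX cX.
have clA : forall N, closed [set y | exists j, [/\ (j < N)%N, j <> k & y = xs j]].
  elim=> [|n IH].
    have -> : [set y | exists j, [/\ (j < 0)%N, j <> k & y = xs j]] = set0.
      by apply/seteqP; split => y // [j []].
    exact: closed0.
  have -> : [set y | exists j, [/\ (j < n.+1)%N, j <> k & y = xs j]] =
    [set y | exists j, [/\ (j < n)%N, j <> k & y = xs j]] `|` [set y | n <> k /\ y = xs n].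
    apply/seteqP; split => y.
      move=> [j [+ jk ->]]; rewrite ltnS leq_eqVlt => /orP[/eqP jn|jn].
        by right => /=; subst j; split.
      by left; exists j.
    case=> [[j [jn jk ->]]|[nk ->]]; first by exists j; split => //; exact: ltnW.
    by exists n.
  apply: closedU => //.
  have [->|nk] := eqVneq n k.
    have -> : [set y | k <> k /\ y = xs k] = set0 by apply/seteqP; split => y // [].
    exact: closed0.
  have -> : [set y | n <> k /\ y = xs n] = [set xs n].
    by apply/seteqP; split => y /=; [case | move=> ->; split => //; exact/eqP].
  exact: accessible_closed_set1 (hausdorff_accessible hX) (xs n).
have clB : closed [set xs k] by apply: accessible_closed_set1; exact: hausdorff_accessible.
have disj : [set y | exists j, [/\ (j < N)%N, j <> k & y = xs j]] `&` [set xs k] = set0.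
  by apply/seteqP; split => y // [[j [_ jk ->]] /inj].
have := (proj1 (@normal_separatorP R X) nX) _ _ (clA N) clB disj.
move=> /(@uniform_separatorP X R) [f [cf f01 fA fB]].
exists f; split => //.
- by move=> y; move: (f01 _ (imageT f y)); rewrite /= in_itv /=.
- by apply: (fB (f (xs k))); exists (xs k).
- by move=> j jN jk; apply: (fA (f (xs j))); exists (xs j) => //; exists j.
Qed.

Lemma iter_inj (X : Type) (phi psi : X -> X) n :
  cancel phi psi -> injective (iter n phi).
Proof. by move=> c; elim: n => [//|n IH] a b /= /(can_inj c) /IH. Qed.

Lemma xs_inj (X : Type) (phi psi : X -> X) (x : X) :
  aperiodic phi x -> cancel phi psi -> injective (fun n => iter n phi x).
Proof.
move=> ap c i j /=.
wlog ij : i j / (i <= j)%N.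
  move=> H e; case: (leqP i j) => h; first exact: H.
  by symmetry; apply: H (ltnW h) _.
have [d ->] : exists d, j = (i + d)%N by exists (j - i)%N; rewrite subnKC.
rewrite iterD => /(@iter_inj X phi psi i c) e.
case: d e => [|d] e; first by rewrite addn0.
by exfalso; apply: (ap d.+1) => //; rewrite -e.
Qed.

Lemma e_in (R : realType) (X : topologicalType) (phi : X -> X) (x : X) M z k :
  compact_hausdorff X -> injective (fun n => iter n phi x) ->
  invariant_subspace phi x M -> M z -> z k != 0 -> M (ev R k).
Proof.
move=> cH inj IM Mz zk.
have IM' := IM; case: IM' => [[Ml2 M0 Madd Mscale Mlim] Minv].
have /choice [G HG] := @sep_fun R X _ cH inj ^~ k.
pose w n := pi_A0 phi x [:: (fun y => (G n y)%:C%C)] z.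
pose t := fun j => z k * ev R k j.
have lz := Ml2 _ Mz.
have Mt : M t.
  apply: (Mlim w).
  - move=> n; apply: Minv => //; apply: A0_1; apply: ccont_real.
    by case: (HG n).
  - apply: (l2_le lz) => j; rewrite /t /ev; case: eqVneq => [->|_].
      by rewrite mulr1.
    by rewrite mulr0 Normc.normc0 normc_ge0.
  - apply: (dist_tail lz).
    + move=> n j jn; rewrite /w pi_A0_1 /pi_f /t /ev.
      case: (HG n) => _ _ g1 g0.
      case: eqVneq => [->|jk]; first by rewrite g1 mul1r mulr1.
      by rewrite g0 //; [rewrite mul0r mulr0 | exact/eqP].
    + move=> n j; rewrite /w pi_A0_1 /pi_f /t /ev.
      case: (HG n) => _ g01 g1 _.
      case: eqVneq => [->|jk]; first by rewrite g1 mul1r mulr1 subrr Normc.normc0 normc_ge0.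
      rewrite mulr0 subr0 Normc.normcM normc_real.
      have /andP[g0 g1'] := g01 (iter j phi x).
      by rewrite ger0_norm // ler_piMl // normc_ge0.
have -> : ev R k = (fun j => (z k)^-1 * t j).
  by apply/funext => j; rewrite /t mulKf.
exact: Mscale.
Qed.

Theorem proposition1 (R : realType) (X : topologicalType) (phi : X -> X) (x : X) :
  compact_hausdorff X -> homeomorphism phi -> aperiodic phi x ->
  nest_rep R phi x.
Proof.
move=> cH [_ [psi [c _ _]]] ap M N IM IN.
have inj := xs_inj ap c.
have [MN|nMN] := pselect (M `<=` N); first by left.
right.
have [z [Mz Nz]] : exists z, M z /\ ~ N z.
  apply: contrapT => H; apply: nMN => y My; apply: contrapT => Ny; apply: H.
  by exists y.
have [i0 zi0] : exists i, z i != 0.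
  apply: contrapT => H; apply: Nz.
  have -> : z = (fun _ => 0).
    apply/funext => j; apply/eqP; apply: contrapT => zj; apply: H; exists j.
    exact/negP.
  by case: IN => [[]].
case: (ex_minnP (ex_intro (fun i => z i != 0) i0 zi0)) => i zi imin.
have VM := ev_shift IM (e_in cH inj IM Mz zi).
move=> w Nw.
apply: (V_in IM VM); first by case: IN => [[Nl2 _ _ _ _] _]; exact: Nl2.
move=> j ji; apply/eqP; apply: contrapT => /negP wj.
apply: Nz.
have VN := ev_shift IN (e_in cH inj IN Nw wj).
apply: (V_in IN VN); first by case: IM => [[Ml2 _ _ _ _] _]; exact: Ml2.
move=> m mj; apply/eqP; apply: contrapT => /negP zm.
have := imin m zm; rewrite leqNgt => /negP; apply.
exact: ltn_trans mj ji.
Qed.
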